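(* Let $X$ be a fake weighted projective space with weights $(\lambda_0,\lambda_1,\ldots,\lambda_n)$ and associated $n$-simplex $P$, and suppose $X$ has at worst canonical singularities. Then $$\mathrm{mult}\,P\leq\frac{h^{n-1}}{\lambda_1\lambda_2\cdots\lambda_n},\qquad\text{where }h:=\sum_{i=0}^n\lambda_i.$$
   Context: Let $N\cong\mathbb{Z}^n$ be a lattice and $N_\mathbb{R}:=N\otimes_\mathbb{Z}\mathbb{R}$. Let $\rho_0,\ldots,\rho_n\in N$ be primitive lattice points with $N_\mathbb{R}=\sum_{i=0}^n\mathbb{R}_{\geq0}\rho_i$. There are positive integers $\lambda_0,\ldots,\lambda_n$ with $\gcd\{\lambda_0,\ldots,\lambda_n\}=1$ such that $\sum_{i=0}^n\lambda_i\rho_i=0$. The cones $\sigma_i$ generated by $\{\rho_j: j\neq i\}$ generate a complete simplicial fan; the associated projective toric variety $X$ is called a fake weighted projective space with weights $(\lambda_0,\ldots,\lambda_n)$ (indexed consistently with the $\rho_i$), and $P:=\mathrm{conv}\{\rho_0,\ldots,\rho_n\}$ is its associated simplex. The multiplicity is $\mathrm{mult}\,P:=[N:\mathbb{Z}\rho_0+\cdots+\mathbb{Z}\rho_n]$. *)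

(* Defs.v *)
From HB Require Import structures.
From mathcomp Require Import all_boot all_order all_algebra.
Set Implicit Arguments. Unset Strict Implicit. Unset Printing Implicit Defensive.
Import Order.TTheory GRing.Theory Num.Theory.
Local Open Scope ring_scope.

(* The lattice N = Z^n is modelled as row vectors 'rV[int]_n. *)

Definition primitive (n : nat) (v : 'rV[int]_n) : Prop :=
  forall (k : int) (w : 'rV[int]_n), v = k *: w -> k = 1 \/ k = -1.

Definition toR (R : realFieldType) (n : nat) (v : 'rV[int]_n) : 'rV[R]_n :=
  map_mx (fun z : int => z%:~R) v.

Definition in_sublattice (n : nat) (rho : 'I_n.+1 -> 'rV[int]_n)
  (v : 'rV[int]_n) : Prop :=
  exists c : 'I_n.+1 -> int, v = \sum_(i < n.+1) c i *: rho i.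

(* m is the index [N : Z rho_0 + ... + Z rho_n]: there is a complete system
   of m pairwise incongruent representatives of N modulo the sublattice. *)
Definition is_index (n : nat) (rho : 'I_n.+1 -> 'rV[int]_n) (m : nat) : Prop :=
  exists s : seq 'rV[int]_n,
    size s = m /\
    (forall i j : nat, (i < m)%N -> (j < m)%N -> i <> j ->
        ~ in_sublattice rho (nth 0 s i - nth 0 s j)) /\
    (forall v : 'rV[int]_n, exists2 x, x \in s & in_sublattice rho (v - x)).

Definition positively_spanning (R : realFieldType) (n : nat)
  (rho : 'I_n.+1 -> 'rV[int]_n) : Prop :=
  forall x : 'rV[R]_n, exists c : 'I_n.+1 -> R,
    (forall i, 0 <= c i) /\ x = \sum_(i < n.+1) c i *: toR R (rho i).

(* Toric criterion for canonical singularities (Reid): for every maximal cone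
   sigma_i = cone(rho_j : j <> i), the only lattice point of sigma_i lying
   strictly below the hyperplane through the rho_j (j <> i), i.e. with
   "height" sum_j c_j < 1, is the origin. *)
Definition canonical_fwps (R : realFieldType) (n : nat)
  (rho : 'I_n.+1 -> 'rV[int]_n) : Prop :=
  forall (i : 'I_n.+1) (v : 'rV[int]_n) (c : 'I_n.+1 -> R),
    (forall j, 0 <= c j) -> c i = 0 ->
    toR R v = \sum_(j < n.+1) c j *: toR R (rho j) ->
    \sum_(j < n.+1) c j < 1 -> v = 0.

(* Main.v *)
Require Import Defs.
From HB Require Import structures.
From mathcomp Require Import all_boot all_order all_algebra.
From mathcomp Require Import zify ring lra.
Import Order.TTheory GRing.Theory Num.Theory.
Local Open Scope ring_scope.
Set Implicit Arguments. Unset Strict Implicit. Unset Printing Implicit Defensive.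

Section Index.
Variable R : realFieldType.
Variable n : nat.
Variable rho : 'I_n.+1 -> 'rV[int]_n.
Hypothesis hspan : positively_spanning R rho.

Definition AZ : 'M[int]_(n.+1, n) := \matrix_i rho i.

Lemma subl_mul v : in_sublattice rho v <-> exists c : 'rV[int]_(n.+1), v = c *m AZ.
Proof.
split=> [[c ->]|[c ->]].
  exists (\row_i c i); rewrite mulmx_sum_row; apply: eq_bigr => i _; by rewrite mxE rowK.
exists (fun i => c 0 i); rewrite mulmx_sum_row; apply: eq_bigr => i _; by rewrite rowK.
Qed.

Lemma Dm_entry (d : seq int) (c : 'rV[int]_(n.+1)) (j : 'I_n) :
  (c *m (\matrix_(i, j) (d`_i *+ (i == j :> nat)) : 'M[int]_(n.+1, n))) 0 j
  = c 0 (widen_ord (leqnSn n) j) * d`_j.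
Proof.
rewrite mxE (bigD1 (widen_ord (leqnSn n) j)) //= big1 ?addr0.
  by rewrite mxE eqxx mulr1n.
move=> i ij; rewrite mxE.
suff -> : (i == j :> nat) = false by rewrite mulr0n mulr0.
apply/negbTE; apply: contra ij => /eqP ij; apply/eqP/val_inj; exact: ij.
Qed.

Lemma index_exists : exists s : seq 'rV[int]_n,
    (forall i j : nat, (i < size s)%N -> (j < size s)%N -> i <> j ->
        ~ in_sublattice rho (nth 0 s i - nth 0 s j)) /\
    (forall v : 'rV[int]_n, exists2 x, x \in s & in_sublattice rho (v - x)).
Proof.
have [L Lu [Rm Ru [d _ AE]]] := int_Smith_normal_form AZ.
set Dm := \matrix_(i, j) _ in AE.
have dnz : forall j : 'I_n, d`_j != 0.
  move=> j; apply/negP => /eqP dj0.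
  pose f := fun z : int => (z%:~R : R).
  have [c [_ hc]] := hspan (row j 1%:M *m map_mx f Rm).
  have H : (\row_i c i *m map_mx f L *m map_mx f Dm) *m map_mx f Rm = row j 1%:M *m map_mx f Rm.
    rewrite hc -!mulmxA -!map_mxM mulmxA -AE.
    rewrite mulmx_sum_row; apply: eq_bigr => i _.
    by rewrite mxE /toR; congr (_ *: _); apply/rowP => k; rewrite !mxE.
  have := congr1 (mulmx^~ (invmx (map_mx f Rm))) H; rewrite !mulmxK ?map_unitmx //.
  move/rowP/(_ j); rewrite !mxE eqxx.
  rewrite (bigD1 (widen_ord (leqnSn n) j)) //= big1 ?addr0.
    by rewrite !mxE eqxx dj0 mul0rn /f mulr0z mulr0 => /eqP; rewrite eq_sym oner_eq0.
  move=> i ij; rewrite !mxE.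
  suff -> : (i == j :> nat) = false by rewrite mulr0n /f mulr0z mulr0.
  apply/negbTE; apply: contra ij => /eqP ij; apply/eqP/val_inj; exact: ij.
1,2: by rewrite /f unitmxE det_map_mx rmorph_unit // -unitmxE.
have subl_char : forall v, in_sublattice rho v <->
    exists u : 'rV[int]_n, v = u *m Rm /\ forall j : 'I_n, (d`_j %| u ord0 j)%Z.
  move=> v; rewrite subl_mul; split=> [[c ->]|[u [-> du]]].
    exists (c *m L *m Dm); split; first by rewrite AE !mulmxA.
    by move=> j; rewrite Dm_entry dvdz_mull.
  pose c' := \row_(i < n.+1) (if unlift ord_max i is Some j then (u ord0 j %/ d`_j)%Z else 0).
  exists (c' *m invmx L); rewrite AE !mulmxA mulmxKV //; congr (_ *m _).
  apply/rowP => j; rewrite Dm_entry mxE.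
  have -> : widen_ord (leqnSn n) j = lift ord_max j by apply: val_inj; rewrite /= /bump leqNgt ltn_ord.
  by rewrite liftK divzK.
have modsmall : forall (a b : nat) (dd : int), (a < `|dd|)%N -> (b < `|dd|)%N ->
    (dd %| a%:Z - b%:Z)%Z -> a = b.
  move=> a b dd ha hb; rewrite -eqz_mod_dvd => /eqP E.
  have : (a %% `|dd|%N)%Z = (b %% `|dd|%N)%Z by rewrite !modz_abs.
  rewrite !modz_small ?ha ?hb //; by move=> [].
pose K := (\max_(j < n) `|(d`_j)%R|).+1.
have leK : forall j : 'I_n, (`|(d`_j)%R| < K)%N by move=> j; rewrite ltnS (leq_bigmax j).
pose PF := fun f : {ffun 'I_n -> 'I_K} => [forall j, (f j < `|(d`_j)%R|)%N].
pose g := fun f : {ffun 'I_n -> 'I_K} => (\row_j ((f j : nat)%:Z)) *m Rm.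
exists [seq g f | f <- enum PF]; split.
  move=> i j; rewrite size_map => hi hj ij.
  have f0 : {ffun 'I_n -> 'I_K} by exact: [ffun => ord0].
  rewrite !(nth_map f0) // -mulmxBl subl_char => -[u [E du]].
  have := congr1 (mulmx^~ (invmx Rm)) E; rewrite !mulmxK // => Eu.
  apply: ij; apply/eqP; rewrite -(nth_uniq f0 hi hj (enum_uniq _)); apply/eqP.
  apply/ffunP => k; apply: val_inj.
  have := mem_nth f0 hi; rewrite mem_enum => /forallP /(_ k) h1.
  have := mem_nth f0 hj; rewrite mem_enum => /forallP /(_ k) h2.
  apply: (modsmall _ _ _ h1 h2); move: (du k); rewrite -Eu !mxE //.
move=> v.
pose t := v *m invmx Rm.
pose F := [ffun j => (inord (absz (t ord0 j %% d`_j)%Z) : 'I_K)].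
have FE : forall j, ((F j : nat)%:Z) = (t ord0 j %% d`_j)%Z.
  move=> j; rewrite ffunE inordK ?gez0_abs ?modz_ge0 ?dnz //.
  apply: (leq_trans _ (ltnW (leK j))); rewrite -ltz_nat gez0_abs ?modz_ge0 ?dnz //.
  by rewrite ltz_mod ?dnz.
exists (g F).
  apply: map_f; rewrite mem_enum; apply/forallP => j.
  rewrite -ltz_nat FE abszE.
  by rewrite ltz_mod ?dnz.
apply/subl_char; exists (t - \row_j ((F j : nat)%:Z)); split.
  by rewrite mulmxBl /t mulmxKV.
clearbody t; move=> j; rewrite !mxE FE.
by rewrite {1}(divz_eq (t ord0 j) d`_j) addrK dvdz_mull.
Qed.

End Index.

Section Main.
Variable R : realFieldType.
Variable n : nat.
Variable rho : 'I_n.+1 -> 'rV[int]_n.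
Variable lambda : 'I_n.+1 -> nat.
Hypothesis hspan : positively_spanning R rho.
Hypothesis hpos : forall i, (0 < lambda i)%N.
Hypothesis hrel : \sum_(i < n.+1) (lambda i)%:Z *: rho i = 0.

Definition AR : 'M[R]_(n.+1, n) := \matrix_i toR R (rho i).
Definition lamR : 'rV[R]_(n.+1) := \row_i (lambda i)%:R.

Lemma toR_sum (I : finType) (c : I -> int) (v : I -> 'rV[int]_n) :
  toR R (\sum_i c i *: v i) = \sum_i (c i)%:~R *: toR R (v i).
Proof.
apply/rowP => j; rewrite !mxE !summxE rmorph_sum; apply: eq_bigr => i _.
by rewrite !mxE rmorphM.
Qed.

Lemma sum_mul (c : 'I_n.+1 -> R) :
  \sum_i c i *: toR R (rho i) = (\row_i c i) *m AR.
Proof.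
rewrite mulmx_sum_row; apply: eq_bigr => i _; by rewrite mxE rowK.
Qed.

Lemma relR : lamR *m AR = 0.
Proof.
rewrite -sum_mul.
transitivity (toR R (\sum_(i < n.+1) (lambda i)%:Z *: rho i)); last first.
  by rewrite hrel /toR map_mx0.
rewrite toR_sum; apply: eq_bigr => i _; by rewrite pmulrn.
Qed.

Lemma AR_full : row_full AR.
Proof.
rewrite -sub1mx; apply/row_subP => j.
have [c [_ ->]] := hspan (row j 1%:M).
by rewrite sum_mul submxMl.
Qed.

Lemma lamR_neq0 : lamR != 0.
Proof.
apply/negP=> /eqP/rowP/(_ ord0); rewrite !mxE => /eqP.
by rewrite pnatr_eq0; move: (hpos ord0); case: (lambda ord0).
Qed.

Lemma rel_unique (u : 'rV[R]_(n.+1)) : u *m AR = 0 -> exists t, u = t *: lamR.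
Proof.
move=> /sub_kermxP uK.
have lK : (lamR <= kermx AR)%MS by apply/sub_kermxP; exact: relR.
have rK : \rank (kermx AR) = 1%N.
  by rewrite mxrank_ker (eqP AR_full) subSnn.
have rl : \rank lamR = 1%N by rewrite rank_rV lamR_neq0.
have := mxrank_leqif_sup lK; rewrite rK rl => /geq_leqif; rewrite leqnn => Kl.
by apply/sub_rVP; apply: submx_trans uK (esym Kl).
Qed.

Lemma relR' : \sum_i (lambda i)%:R *: toR R (rho i) = 0.
Proof.
by rewrite -[RHS]relR -sum_mul.
Qed.

Lemma rel_unique' (u : 'I_n.+1 -> R) : \sum_i u i *: toR R (rho i) = 0 ->
  exists t, forall i, u i = t * (lambda i)%:R.
Proof.
rewrite sum_mul => /rel_unique [t ht]; exists t => i.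
by have := congr1 (fun v : 'rV[R]_n.+1 => v 0 i) ht; rewrite !mxE.
Qed.

Definition hh := (\sum_(i < n.+1) lambda i)%N.

Lemma hh_gt0 : (0 < hh)%N.
Proof. rewrite /hh big_ord_recl; have := hpos ord0; lia. Qed.

Lemma lam_gt0R i : 0 < (lambda i)%:R :> R.
Proof. by rewrite ltr0n hpos. Qed.

Hypothesis hcan : canonical_fwps R rho.

Lemma shift0 (x : 'rV[int]_n) (u : 'I_n.+1 -> R) : (forall i, 0 < u i) ->
  \sum_i u i = 1 -> toR R x = \sum_i u i *: toR R (rho i) -> x = 0.
Proof.
move=> upos usum hx.
pose F i := u i / (lambda i)%:R.
case: (@arg_minP _ _ _ ord0 xpredT F isT) => i0 _ Hmin.
pose t := F i0.
have tpos : 0 < t by rewrite /t /F divr_gt0 // lam_gt0R.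
pose c i := u i - t * (lambda i)%:R.
apply: (hcan (i := i0) (c := c)).
- move=> j; rewrite /c subr_ge0.
  by rewrite -ler_pdivlMr ?lam_gt0R //; apply: Hmin.
- by rewrite /c /t /F divfK ?subrr // lt0r_neq0 // lam_gt0R.
- rewrite hx /c.
  under [RHS]eq_bigr do rewrite scalerBl -scalerA.
  by rewrite sumrB -scaler_sumr relR' scaler0 subr0.
- rewrite /c sumrB usum -mulr_sumr -natr_sum -/hh.
  rewrite gtrDl oppr_lt0 mulr_gt0 // ltr0n hh_gt0 //.
Qed.

Definition ext (a : R) (c : 'I_n -> R) (i : 'I_n.+1) : R :=
  if unlift ord0 i is Some j then c j else a.

Lemma ext0 a c : ext a c ord0 = a.
Proof. by rewrite /ext unlift_none. Qed.

Lemma extS a c j : ext a c (lift ord0 j) = c j.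
Proof. by rewrite /ext liftK. Qed.

Lemma ext_sumv a c : \sum_i ext a c i *: toR R (rho i) =
  a *: toR R (rho ord0) + \sum_j c j *: toR R (rho (lift ord0 j)).
Proof.
rewrite big_ord_recl ext0; congr (_ + _); apply: eq_bigr => j _; by rewrite extS.
Qed.

Lemma ext_sum1 a c : \sum_i ext a c i = a + \sum_j c j.
Proof.
rewrite big_ord_recl ext0; congr (_ + _); apply: eq_bigr => j _; by rewrite extS.
Qed.

Definition w (j : 'I_n) : 'rV[int]_n := rho (lift ord0 j) - rho ord0.

Lemma toRB (a b : 'rV[int]_n) : toR R (a - b) = toR R a - toR R b.
Proof. by rewrite /toR map_mxB. Qed.

Lemma toRD (a b : 'rV[int]_n) : toR R (a + b) = toR R a + toR R b.
Proof. by rewrite /toR map_mxD. Qed.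

Lemma toRZ (k : int) (a : 'rV[int]_n) : toR R (k *: a) = k%:~R *: toR R a.
Proof. by rewrite /toR map_mxZ. Qed.

Lemma wsum (c : 'I_n -> R) : \sum_j c j *: toR R (w j) =
  \sum_j c j *: toR R (rho (lift ord0 j)) - (\sum_j c j) *: toR R (rho ord0).
Proof.
rewrite scaler_suml -sumrB; apply: eq_bigr => j _; by rewrite toRB scalerBr.
Qed.

Lemma ext_w a c : \sum_i ext a c i *: toR R (rho i) =
  (a + \sum_j c j) *: toR R (rho ord0) + \sum_j c j *: toR R (w j).
Proof.
rewrite ext_sumv wsum scalerDl -addrA; congr (_ + _); by rewrite addrC subrK.
Qed.

Lemma w_indep (c : 'I_n -> R) : \sum_j c j *: toR R (w j) = 0 -> forall j, c j = 0.
Proof.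
move=> H.
have := ext_w (- \sum_j c j) c; rewrite H addNr scale0r addr0.
move=> /rel_unique' [t ht].
have : \sum_i ext (- \sum_j c j) c i = 0 by rewrite ext_sum1 addNr.
under eq_bigr do rewrite ht.
rewrite -mulr_sumr -natr_sum -/hh => /eqP; rewrite mulf_eq0 pnatr_eq0.
have := hh_gt0; case: (hh) => // k _; rewrite orbF => /eqP t0 j.
by have := ht (lift ord0 j); rewrite extS t0 mul0r.
Qed.

Definition beta j : R := (lambda (lift ord0 j))%:R / hh%:R.

Lemma hhR_neq0 : hh%:R != 0 :> R.
Proof. by rewrite pnatr_eq0 -lt0n hh_gt0. Qed.

Lemma ext_lam i : ext ((lambda ord0)%:R / hh%:R) beta i = (lambda i)%:R / hh%:R.
Proof. by case: (unliftP ord0 i) => [j ->|->]; rewrite ?extS ?ext0. Qed.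

Lemma sum_lam_h : \sum_i (lambda i)%:R / hh%:R = 1 :> R.
Proof. by rewrite -mulr_suml -natr_sum -/hh divff // hhR_neq0. Qed.

Lemma rho0_w : \sum_j beta j *: toR R (w j) = - toR R (rho ord0).
Proof.
have := ext_w ((lambda ord0)%:R / hh%:R) beta.
have -> : ((lambda ord0)%:R / hh%:R + \sum_j beta j) = 1.
  by rewrite -ext_sum1 -[RHS]sum_lam_h; apply: eq_bigr => i _; rewrite ext_lam.
have -> : \sum_i ext ((lambda ord0)%:R / hh%:R) beta i *: toR R (rho i) = 0.
  under eq_bigr do rewrite ext_lam mulrC -scalerA.
  by rewrite -scaler_sumr relR' scaler0.
by rewrite scale1r => /eqP; rewrite eq_sym addr_eq0 => /eqP ->; rewrite opprK.
Qed.

Lemma star (y : 'rV[int]_n) (v : 'I_n -> R) : (forall j, 0 < v j) ->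
  \sum_j v j < 1 -> toR R y = \sum_j v j *: toR R (w j) -> forall j, v j = beta j.
Proof.
move=> vpos vsum hy.
have E : toR R (y + rho ord0) = \sum_i ext (1 - \sum_j v j) v i *: toR R (rho i).
  by rewrite ext_w subrK scale1r toRD hy addrC.
have y0 : y + rho ord0 = 0.
  apply: (shift0 _ _ E).
  - by move=> i; case: (unliftP ord0 i) => [j ->|->]; rewrite ?extS ?ext0 ?subr_gt0.
  - by rewrite ext_sum1 subrK.
move: E; rewrite y0 /toR map_mx0 => /esym /rel_unique' [t ht].
have th : t * hh%:R = 1.
  rewrite natr_sum mulr_sumr.
  transitivity (\sum_i ext (1 - \sum_j v j) v i); last by rewrite ext_sum1 subrK.
  by apply: eq_bigr => i _; rewrite ht.
move=> j; have := ht (lift ord0 j); rewrite extS => ->.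
rewrite /beta mulrC; apply: (canRL (mulfK hhR_neq0)).
by rewrite -mulrA th mulr1.
Qed.

Definition W : 'M[int]_n := \matrix_j w j.
Definition dl := \det W.
Definition alpha (y : 'rV[int]_n) : 'rV[int]_n := y *m \adj W.

Lemma alphaW y : alpha y *m W = dl *: y.
Proof. by rewrite /alpha -mulmxA mul_adj_mx mul_mx_scalar. Qed.

Lemma mulW (c : 'rV[int]_n) : c *m W = \sum_j c 0 j *: w j.
Proof. rewrite mulmx_sum_row; apply: eq_bigr => j _; by rewrite rowK. Qed.

Lemma coordR y : dl%:~R *: toR R y = \sum_j (alpha y 0 j)%:~R *: toR R (w j).
Proof. by rewrite -toRZ -alphaW mulW toR_sum. Qed.

Lemma dl_neq0 : dl != 0.
Proof.
apply/negP => /eqP d0.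
pose WR : 'M[R]_n := map_mx intr W.
have : ~~ row_free WR.
  by rewrite row_free_unit unitmxE det_map_mx -/dl d0 rmorph0 unitr0.
rewrite -kermx_eq0 => /rowV0Pn [v /sub_kermxP vK]; apply/negP; rewrite negbK.
apply/eqP/rowP => j; rewrite mxE; apply: (w_indep (c := fun j => v 0 j)).
transitivity (v *m WR); last exact: vK.
rewrite mulmx_sum_row; apply: eq_bigr => k _.
by rewrite /WR /toR; congr (_ *: _); apply/rowP => l; rewrite !mxE.
Qed.

Lemma sum_beta : \sum_j beta j = 1 - (lambda ord0)%:R / hh%:R.
Proof. have := sum_lam_h; rewrite big_ord_recl /beta; lra. Qed.

Lemma beta_gt0 j : 0 < beta j.
Proof. by rewrite /beta divr_gt0 // ?lam_gt0R // ltr0n hh_gt0. Qed.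

Lemma star_d (e : 'rV[int]_n) (d : 'I_n -> R) :
  toR R e = \sum_j d j *: toR R (w j) -> (forall j, `|d j| < beta j) -> forall j, d j = 0.
Proof.
move=> he hd.
pose s : int := if \sum_j d j <= 0 then 1 else -1.
have s2 : (s%:~R : R) * s%:~R = 1 by rewrite /s; case: ifP => _; rewrite ?mulrNN mulr1.
have sneg : (s%:~R : R) * \sum_j d j <= 0.
  rewrite /s; case: ifP => H; first by rewrite mul1r.
  by rewrite mulN1r oppr_le0 ltW // ltNge H.
have key := star (y := s *: e - rho ord0) (v := fun j => beta j + s%:~R * d j).
have vpos : forall j, 0 < beta j + s%:~R * d j.
  move=> j; have := hd j; rewrite /s; case: ifP => _; rewrite ?mul1r ?mulN1r;
  rewrite ltr_norml => /andP [h1 h2]; lra.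
have := key vpos.
rewrite big_split /= sum_beta -mulr_sumr.
have lt1 : 1 - (lambda ord0)%:R / hh%:R + s%:~R * \sum_j d j < 1 :> R.
  have : 0 < (lambda ord0)%:R / hh%:R :> R by rewrite divr_gt0 // ?lam_gt0R // ltr0n hh_gt0.
  lra.
move=> /(_ lt1) H j.
have : toR R (s *: e - rho ord0) = \sum_j (beta j + s%:~R * d j) *: toR R (w j).
  rewrite toRB toRZ he -rho0_w scaler_sumr addrC -big_split; apply: eq_bigr => k _.
  by rewrite scalerDl scalerA.
move=> /H /(_ j) /eqP; rewrite -subr_eq0 addrC addKr mulf_eq0 => /orP [|/eqP //].
by rewrite /s; case: ifP => _; rewrite ?oppr_eq0 oner_eq0.
Qed.

Hypothesis hgcd : \big[gcdn/0%N]_(i < n.+1) lambda i = 1%N.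

Lemma gcd_div (D : nat) : (forall i, hh %| D * lambda i)%N -> (hh %| D)%N.
Proof.
move=> H; have : (hh %| \big[gcdn/0%N]_(i < n.+1) (D * lambda i))%N.
  by apply/dvdn_biggcdP; move=> i _; exact: H.
by rewrite -(big_morph _ (muln_gcdr D) (muln0 D)) hgcd muln1.
Qed.

Definition ad := `|dl|%N.

Lemma ad_gt0 : (0 < ad)%N.
Proof. by rewrite /ad absz_gt0 dl_neq0. Qed.

Definition alp' (y : 'rV[int]_n) : 'rV[int]_n := sgz dl *: alpha y.

Lemma alp'B a b : alp' (a - b) = alp' a - alp' b.
Proof. by rewrite /alp' /alpha mulmxBl scalerBr. Qed.

Lemma coord_ad y : ad%:R *: toR R y = \sum_j (alp' y 0 j)%:~R *: toR R (w j).
Proof.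
have := congr1 (fun v => (sgz dl)%:~R *: v) (coordR y); rewrite /= scalerA -intrM.
rewrite -abszEsg scaler_sumr => ->; apply: eq_bigr => j _.
by rewrite scalerA -intrM /alp' [in RHS]mxE.
Qed.

Lemma toR_inj (a b : 'rV[int]_n) : toR R a = toR R b -> a = b.
Proof.
move=> /rowP H; apply/rowP => j; have := H j; rewrite !mxE => /eqP.
by rewrite eqr_int => /eqP.
Qed.

Lemma subl_w (a : int) (c : 'I_n -> int) :
  in_sublattice rho (a *: rho ord0 + \sum_j c j *: w j).
Proof.
exists (fun i => if unlift ord0 i is Some j then c j else a - \sum_j c j).
rewrite big_ord_recl unlift_none.
under [X in _ = _ + X]eq_bigr do rewrite liftK.
have -> : \sum_j c j *: w j = \sum_j c j *: rho (lift ord0 j) - (\sum_j c j) *: rho ord0.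
  by rewrite scaler_suml -sumrB; apply: eq_bigr => j _; rewrite /w scalerBr.
by rewrite scalerBl addrA addrAC.
Qed.

Lemma count_bound (s : seq 'rV[int]_n)
  (hinc : forall i j : nat, (i < size s)%N -> (j < size s)%N -> i <> j ->
        ~ in_sublattice rho (nth 0 s i - nth 0 s j)) :
  (size s * hh * \prod_(j < n) (ad * lambda (lift ord0 j)) <= (hh * ad) ^ n)%N.
Proof.
set m := size s.
pose B := fun j : 'I_n => (ad * lambda (lift ord0 j))%N.
pose Q := (hh * ad)%N.
have Qgt0 : (0 < Q)%N by rewrite muln_gt0 hh_gt0 ad_gt0.
pose T := ('I_m * 'I_hh * {dffun forall j : 'I_n, 'I_(B j)})%type.
pose y := fun (i k : nat) => nth 0 s i + (k%:Z) *: rho ord0.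
pose X := fun (p : T) (j : 'I_n) =>
  (hh%:Z * alp' (y p.1.1 p.1.2) 0 j + ((p.2 j : nat)%:Z))%R.
pose Phi := fun p : T => [ffun j => (inord (absz (X p j %% Q%:Z)%Z) : 'I_(Q.-1).+1)].
have cardT : #|{: T}| = (m * hh * \prod_j B j)%N.
  rewrite !card_prod !card_ord card_dep_ffun foldrE /image_mem big_map big_enum /=.
  by congr (_ * _)%N; apply: eq_bigr => j _; rewrite card_ord.
have Hinj : injective Phi.
  move=> [[i k] r] [[i' k'] r'] /ffunP E.
  set p := (i, k, r); set p' := (i', k', r').
  have EX : forall j, (X p j %% Q%:Z)%Z = (X p' j %% Q%:Z)%Z.
    move=> j; have := E j; rewrite !ffunE => /(congr1 val); rewrite /= !inordK.
    - move=> /(congr1 Posz); rewrite !gez0_abs ?modz_ge0 //; by rewrite eqz_nat -lt0n.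
    - rewrite prednK // -ltz_nat gez0_abs ?modz_ge0 ?ltz_pmod //; by rewrite ?eqz_nat -?lt0n ?ltz_nat.
    - rewrite prednK // -ltz_nat gez0_abs ?modz_ge0 ?ltz_pmod //; by rewrite ?eqz_nat -?lt0n ?ltz_nat.
  pose nq := fun j => ((X p j - X p' j) %/ Q%:Z)%Z.
  have Enq : forall j, (X p j - X p' j = nq j * Q%:Z)%R.
    by move=> j; rewrite /nq divzK // -eqz_mod_dvd; apply/eqP; exact: EX.
  pose e := y i k - y i' k'.
  have Ealp : forall j, (hh%:Z * alp' e 0 j = nq j * Q%:Z + (r' j : nat)%:Z - (r j : nat)%:Z)%R.
    move=> j; rewrite -Enq /X /e alp'B mxE [X in _ + X]mxE /=; ring.
  have adR : ad%:R != 0 :> R by rewrite pnatr_eq0 -lt0n ad_gt0.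
  have hhR : hh%:R != 0 :> R := hhR_neq0.
  pose d := fun j => (((r' j : nat)%:R - (r j : nat)%:R) / Q%:R : R).
  have He : toR R (e - \sum_j nq j *: w j) = \sum_j d j *: toR R (w j).
    have te : toR R e = \sum_j ((alp' e 0 j)%:~R / ad%:R) *: toR R (w j).
      apply: (scalerI adR); rewrite coord_ad scaler_sumr; apply: eq_bigr => j _.
      by rewrite scalerA mulrC divfK.
    rewrite toRB toR_sum te -sumrB; apply: eq_bigr => j _; rewrite -scalerBl.
    congr (_ *: _).
    have := congr1 (fun z : int => z%:~R : R) (Ealp j).
    rewrite /= intrB intrD !intrM !pmulrn => HA.
    have -> : (alp' e 0 j)%:~R = ((nq j)%:~R * Q%:R + (r' j : nat)%:R - (r j : nat)%:R) / hh%:R :> R.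
      by rewrite -HA [hh%:R * _]mulrC mulfK.
    rewrite /d /Q natrM; field.
    by rewrite adR hhR.
  have dz : forall j, d j = 0.
    apply: (star_d He) => j.
    have Hr : ((r j : nat) < B j)%N := ltn_ord (r j).
    have Hr' : ((r' j : nat) < B j)%N := ltn_ord (r' j).
    move: Hr Hr'; rewrite -!(ltr_nat R) /B natrM => Hr Hr'.
    have h0 : 0 <= (r j : nat)%:R :> R := ler0n _ _.
    have h0' : 0 <= (r' j : nat)%:R :> R := ler0n _ _.
    have QR : 0 < Q%:R :> R by rewrite ltr0n.
    rewrite /d normrM normfV (ger0_norm (ltW QR)) ltr_pdivrMr //.
    rewrite /beta /Q natrM mulrA divfK // ltr_norml; apply/andP; split; lra.
  have rr : forall j, (r j : nat) = r' j.
    move=> j; move: (dz j); rewrite /d => /eqP; rewrite mulf_eq0 invr_eq0 pnatr_eq0.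
    have -> : (Q == 0)%N = false by apply/negbTE; rewrite -lt0n.
    by rewrite orbF subr_eq0 eqr_nat => /eqP ->.
  have ee : e = \sum_j nq j *: w j.
    apply/eqP; rewrite -subr_eq0; apply/eqP; apply: toR_inj.
    rewrite He /toR map_mx0; apply: big1 => j _; by rewrite dz scale0r.
  have ii : i = i'.
    case: (eqVneq (val i) (val i')) => [|nii]; first exact: val_inj.
    exfalso; apply: (hinc i i' (ltn_ord i) (ltn_ord i') (elimN eqP nii)).
    have -> : nth 0 s i - nth 0 s i' = (k'%:Z - k%:Z) *: rho ord0 + \sum_j nq j *: w j.
      rewrite -ee /e /y; apply/rowP => l; rewrite !mxE; ring.
    exact: subl_w.
  pose c : int := (k%:Z - k'%:Z)%R.
  have E2 : toR R (c *: rho ord0) = \sum_j (nq j)%:~R *: toR R (w j).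
    rewrite -toR_sum -ee /e /y ii; congr (toR R _); apply/rowP => l; rewrite !mxE /c; ring.
  have E3 : \sum_j ((nq j)%:~R + c%:~R * beta j) *: toR R (w j) = 0.
    under eq_bigr do rewrite scalerDl.
    rewrite big_split /= -E2 toRZ -[toR R (rho ord0)]opprK -rho0_w scalerN scaler_sumr.
    under [X in _ + X]eq_bigr do rewrite -scalerA.
    by rewrite addNr.
  have Hj := w_indep E3.
  have dv : forall i0 : 'I_n.+1, (hh%:Z %| c * (lambda i0)%:Z)%Z.
    move=> i0; case: (unliftP ord0 i0) => [j ->|->].
      have := Hj j; rewrite /beta => H.
      have : ((nq j) * hh%:Z + c * (lambda (lift ord0 j))%:Z)%:~R = 0 :> R.
        rewrite intrD !intrM -!pmulrn.
        have -> : c%:~R * (lambda (lift ord0 j))%:R = c%:~R * ((lambda (lift ord0 j))%:R / hh%:R) * hh%:R :> R.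
          by rewrite -mulrA divfK.
        by rewrite -mulrDl H mul0r.
      move/eqP; rewrite -(mulr0z (1 : R)) eqr_int => /eqP H2.
      have -> : c * (lambda (lift ord0 j))%:Z = - (nq j * hh%:Z) by apply/eqP; rewrite -addr_eq0 addrC H2.
      by apply/dvdzP; exists (- nq j); rewrite mulNr.
    have Hs : \sum_j (nq j)%:~R = - c%:~R * (1 - (lambda ord0)%:R / hh%:R) :> R.
      rewrite -sum_beta mulr_sumr; apply: eq_bigr => j _.
      by apply/eqP; rewrite mulNr -addr_eq0 Hj.
    have : (c * (lambda ord0)%:Z)%:~R = (hh%:Z * (c + \sum_j nq j))%:~R :> R.
      rewrite !intrM intrD [(\sum_j nq j)%:~R]rmorph_sum /= -/hh Hs -!pmulrn; field; exact: hhR.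
    move/eqP; rewrite eqr_int => /eqP ->.
    by rewrite dvdz_mulr // dvdzz.
  have hd : (hh %| `|c|)%N.
    apply: gcd_div => i0; have := dv i0; by rewrite dvdzE abszM.
  have kk : k = k'.
    apply: val_inj => /=.
    have ck : (`|c| < hh)%N.
      rewrite /c; have := ltn_ord k; have := ltn_ord k'; lia.
    have c0 : `|c|%N = 0%N.
      case: (posnP `|c|%N) => // pos; have := dvdn_leq pos hd; lia.
    move: c0; rewrite /c; lia.
  rewrite /p /p' ii kk; congr (_, _); apply/ffunP => j; apply: val_inj; exact: rr j.
have := leq_card Phi Hinj; rewrite cardT card_ffun !card_ord prednK //.
Qed.

End Main.

Theorem mainTheorem8 (R : realFieldType) (n : nat)
  (rho : 'I_n.+1 -> 'rV[int]_n) (lambda : 'I_n.+1 -> nat)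
  (hprim : forall i, primitive (rho i))
  (hspan : positively_spanning R rho)
  (hpos : forall i, (0 < lambda i)%N)
  (hgcd : \big[gcdn/0%N]_(i < n.+1) lambda i = 1%N)
  (hrel : \sum_(i < n.+1) (lambda i)%:Z *: rho i = 0)
  (hcan : canonical_fwps R rho) :
  exists m : nat, is_index rho m /\
    (m%:R : R) <= ((\sum_(i < n.+1) lambda i) ^ n.-1)%N%:R
                  / (\prod_(i < n) lambda (lift ord0 i))%N%:R.
Proof.
have [s [hinc hcomp]] := index_exists hspan.
exists (size s); split; first by exists s.
have Hc := @count_bound R n rho lambda hspan hpos hrel hcan hgcd s hinc.
set P := (\prod_(i < n) lambda (lift ord0 i))%N.
have Ppos : (0 < P)%N by apply: prodn_gt0 => i; exact: hpos.
have hpos' : (0 < hh lambda)%N by apply: hh_gt0.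
have adpos : (0 < ad rho)%N by apply: (@ad_gt0 R n rho lambda hspan hpos hrel).
move: Hc; set a := ad rho; set h := hh lambda => Hc.
have E1 : (\prod_(j < n) (a * lambda (lift ord0 j)) = a ^ n * P)%N.
  by rewrite big_split /= prod_nat_const card_ord.
move: Hc; rewrite E1 expnMn => Hc.
have Hc2 : (size s * h * P <= h ^ n)%N.
  rewrite -(@leq_pmul2r (a ^ n)) ?expn_gt0 ?adpos //.
  by move: Hc; rewrite [(a ^ n * P)%N]mulnC mulnA.
have Hc3 : (size s * P <= h ^ n.-1)%N.
  have gen : forall (N m P h : nat), (0 < h)%N -> (0 < P)%N ->
      (m * h * P <= h ^ N)%N -> (m * P <= h ^ N.-1)%N.
    case=> [|N] m0 P0 h0 hp Pp H /=.
      by rewrite expn0 in H *; nia.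
    by rewrite expnS in H; nia.
  exact: gen.
rewrite ler_pdivlMr ?ltr0n // -natrM ler_nat.
exact: Hc3.
Qed.
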